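(* There is $p_0$ such that the following holds for every prime $p>p_0$. Let $S\subseteq\mathbb{Z}_p$ with $p/3<|S|<2p/5$, and for $n\in\mathbb{Z}_p$ let $r(n)$ be the number of pairs $(s_1,s_2)\in S\times S$ with $s_1+s_2=n$. Then for every nonempty $T\subseteq\mathbb{Z}_p$, $$\sum_{n\in T} r(n)<0.93\,|S|\,(|S|\,|T|)^{1/2}.$$ *)

(* Defs.v *)
From Stdlib Require Import Reals.
From mathcomp Require Import all_boot all_algebra.
Set Implicit Arguments. Unset Strict Implicit. Unset Printing Implicit Defensive.

(* Z_p is modelled by 'Z_p (for prime p, p >= 2, so 'Z_p = Z/pZ). *)
Definition rep_count (p : nat) (S : {set 'Z_p}) (n : 'Z_p) : nat :=
  #|[set x : 'Z_p * 'Z_p | (x.1 \in S) && (x.2 \in S) && (x.1 + x.2 == n)%R]|.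

(* Main.v *)
Require Import Defs.
From Stdlib Require Import Reals.
From mathcomp Require Import all_boot all_algebra.
From Stdlib Require Import Lra Psatz.
From mathcomp Require Import zify ring.
Set Implicit Arguments. Unset Strict Implicit. Unset Printing Implicit Defensive.
Import GRing.Theory.
Local Open Scope ring_scope.

Section CD.
Variable p : nat.
Hypothesis pr : prime p.

Lemma cardZ : #|'Z_p| = p.
Proof. by rewrite card_ord Zp_cast // prime_gt1. Qed.

Lemma inv_all (A : {set 'Z_p}) (d : 'Z_p) : d != 0 ->
  (forall a, a \in A -> a + d \in A) -> A != set0 -> A = setT.
Proof.
move=> dn0 Hd /set0Pn [a0 Ha0].
have hk : forall k : nat, a0 + d *+ k \in A.
  elim=> [|k IH]; first by rewrite mulr0n addr0.
  by rewrite mulrSr addrA; apply: Hd.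
have du : d \is a GRing.unit.
  rewrite -(natr_Zp d) unitZpE ?prime_gt1 // prime_coprime //.
  apply/negP => /dvdnP [q Hq].
  have : (nat_of_ord d < p)%N by have := ltn_ord d; move: (Zp_cast (prime_gt1 pr)) => E; rewrite {2}E.
  move: dn0; rewrite -val_eqE /= => dn0.
  rewrite Hq; case: q Hq => [|q] Hq; first by rewrite Hq in dn0.
  by rewrite mulSn ltnNge leq_addr.
apply/setP=> x; rewrite inE.
have -> : x = a0 + d *+ (nat_of_ord ((x - a0) / d)).
  by rewrite -mulr_natr natr_Zp mulrC divrK // addrC subrK.
exact: hk.
Qed.

Definition sumset (A B : {set 'Z_p}) := [set x + y | x in A, y in B].

Lemma sumset_ge (A B : {set 'Z_p}) b : b \in B -> (#|A| <= #|sumset A B|)%N.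
Proof.
move=> Hb.
have <- : #|[set x + b | x in A]| = #|A| by apply: card_imset; exact: addIr.
apply: subset_leq_card; apply/subsetP=> z /imsetP [x Hx ->].
by apply/imset2P; exists x b.
Qed.

Lemma CDn n : forall (A B : {set 'Z_p}), #|B| = n -> A != set0 -> B != set0 ->
  (minn p (#|A| + #|B|).-1 <= #|sumset A B|)%N.
Proof.
elim/ltn_ind: n => n IH A B Hn An0 Bn0.
have [b Hb] := set0Pn _ Bn0.
case: (leqP #|B| 1) => HB.
  apply: leq_trans (sumset_ge A Hb); lia.
case: (boolP [exists a in A, exists b in B,
   ~~ ([set y + (a - b) | y in B] \subset A)]).
- case/exists_inP => a Ha /exists_inP [b1 Hb1 Hns].
  set e := a - b1.
  set C := [set y + e | y in B].
  set A' := A :|: C.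
  set B' := [set y in B | y + e \in A].
  have cC : #|C| = #|B| by apply: card_imset; exact: addIr.
  have cI : #|A :&: C| = #|B'|.
    rewrite -(card_imset B' (addIr e)); apply: eq_card => z.
    rewrite !inE; apply/idP/idP.
    + case/andP=> Hz /imsetP [y Hy Ez]; apply/imsetP; exists y => //.
      by rewrite inE Hy -Ez Hz.
    + case/imsetP=> y; rewrite inE => /andP [Hy Hye] ->.
      by rewrite Hye /=; apply/imsetP; exists y.
  have B'0 : B' != set0.
    by apply/set0Pn; exists b1; rewrite inE Hb1 /e addrC subrK.
  have A'0 : A' != set0 by apply/set0Pn; exists a; rewrite inE Ha.
  have cB' : (#|B'| < #|B|)%N.
    apply: proper_card; rewrite properEneq; apply/andP; split.
    + apply/negP => /eqP EB; apply: (negP Hns); apply/subsetP => z.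
      case/imsetP=> y Hy ->.
      by move: Hy; rewrite -EB inE => /andP [].
    + by apply/subsetP => z; rewrite inE => /andP [].
  have sub : sumset A' B' \subset sumset A B.
    apply/subsetP=> z /imset2P [x y Hx Hy ->].
    move: Hy; rewrite inE => /andP [Hy Hye].
    move: Hx; rewrite inE => /orP [Hx|].
    + by apply/imset2P; exists x y.
    + case/imsetP=> w Hw ->.
      apply/imset2P; exists (y + e) w => //.
      by rewrite addrC [w + e]addrC addrA.
  have H := IH #|B'| (ltac:(by rewrite -Hn)) A' B' (erefl _) A'0 B'0.
  have := cardsUI A C; rewrite -/A' cC cI => E.
  apply: leq_trans (subset_leq_card sub).
  apply: leq_trans H; lia.
- move=> Hall.
  have [b2 Hb2] : exists b2, b2 \in B :\ b.
    apply/set0Pn; rewrite -card_gt0; have := cardsD1 b B; rewrite Hb /=.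
    by move=> E; move: HB; rewrite E add1n ltnS.
  move: Hb2; rewrite !inE => /andP [b2b Hb2].
  have At : A = setT.
    apply: (@inv_all A (b2 - b)); [by rewrite subr_eq0 | | by []].
    move=> a Ha.
    move: Hall; rewrite negb_exists_in => /forall_inP /(_ a Ha).
    rewrite negb_exists_in => /forall_inP /(_ b Hb) /negPn /subsetP; apply.
    apply/imsetP; exists b2 => //.
    by rewrite addrCA addrC.
  have : #|sumset A B| = p.
    apply: etrans cardZ; apply: eq_card => z; rewrite inE.
    apply/imset2P; exists (z - b) b => //; first by rewrite At inE.
    by rewrite subrK.
  lia.
Qed.

Lemma CD (A B : {set 'Z_p}) : A != set0 -> B != set0 ->
  (minn p (#|A| + #|B|).-1 <= #|sumset A B|)%N.
Proof. exact: CDn. Qed.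
End CD.
Local Close Scope ring_scope.
Section Main.
Variable p : nat.
Variable S : {set 'Z_p}.
Local Notation s := #|S|.

Definition fs (d : 'Z_p) : nat := \sum_(x in S) ((x - d)%R \in S).
Definition gs (d : 'Z_p) : nat := \sum_(x in S) ((x - d)%R \notin S).
Definition Bl (i : nat) : {set 'Z_p} := [set d | gs d <= i].
Definition nl i := #|Bl i|.

Lemma fgs d : fs d + gs d = s.
Proof.
rewrite /fs /gs -big_split /= -sum1_card; apply: eq_bigr => x _.
by case: (_ \in S).
Qed.

Lemma gs_le d : gs d <= s.
Proof. by rewrite -(fgs d) leq_addl. Qed.

Lemma gs0 : gs 0%R = 0.
Proof. by rewrite /gs big1 // => x Hx; rewrite subr0 Hx. Qed.

Lemma sum_shift (F : 'Z_p -> nat) a : \sum_d F (d + a)%R = \sum_d F d.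
Proof. by rewrite [RHS](reindex_inj (addIr a)). Qed.

Lemma sum_neg (F : 'Z_p -> nat) a : \sum_d F (a - d)%R = \sum_d F d.
Proof. by rewrite [RHS](reindex_inj (can_inj (subKr a))). Qed.

Lemma gs_sub (d e : 'Z_p) : gs (d + e)%R <= gs d + gs e.
Proof.
rewrite /gs.
apply: (@leq_trans (\sum_(x in S) (((x - e)%R \notin S) + (((x - e)%R \in S) && ((x - e - d)%R \notin S))))).
  apply: leq_sum => x Hx.
  rewrite opprD addrA (addrAC x (- d)%R).
  by case: ((x - e)%R \in S); case: ((x - e - d)%R \in S).
rewrite big_split /= addnC leq_add2r.
apply: (@leq_trans (\sum_x ((((x - e)%R \in S) && ((x - e - d)%R \notin S)) : nat))).
  by rewrite [X in _ <= X](bigID (fun x => x \in S)) /= leq_addr.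
rewrite (sum_shift (fun x => ((x \in S) && ((x - d)%R \notin S)) : nat) (- e)%R).
by rewrite [X in _ <= X]big_mkcond /=; apply: leq_sum => x _; case: (x \in S).
Qed.

Lemma Bl0 i : (0%R : 'Z_p) \in Bl i.
Proof. by rewrite inE gs0. Qed.

Lemma Bl_mono i j : i <= j -> Bl i \subset Bl j.
Proof. by move=> Hij; apply/subsetP=> d; rewrite !inE => H; apply: leq_trans Hij. Qed.

Lemma nl_mono i j : i <= j -> nl i <= nl j.
Proof. by move=> H; apply: subset_leq_card; apply: Bl_mono. Qed.

Lemma nlE i : nl i = \sum_d (gs d <= i : nat).
Proof. by rewrite /nl /Bl -sum1dep_card big_mkcond. Qed.

Lemma sum_le_i g n : \sum_(i < n) (g <= i : nat) = n - g.
Proof.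
elim: n => [|n IH]; first by rewrite big_ord0.
rewrite big_ord_recr /= IH; case: (leqP g n) => H /=; lia.
Qed.

Lemma mass : \sum_(i < s) nl i = s * s.
Proof.
rewrite (eq_bigr (fun i : 'I_s => \sum_d (gs d <= i : nat))); last by move=> i _; rewrite nlE.
rewrite exchange_big /=.
rewrite (eq_bigr (fun d => fs d)); last first.
  by move=> d _; rewrite sum_le_i -(fgs d) addnK.
rewrite /fs exchange_big /= -sum_nat_const; apply: eq_bigr => x Hx.
by rewrite (sum_neg (fun d => (d \in S) : nat) x) -big_mkcond sum1_card.
Qed.
Hypothesis pr : prime p.

Lemma Bl_add i j : sumset (Bl i) (Bl j) \subset Bl (i + j).
Proof.
apply/subsetP=> z /imset2P [x y Hx Hy ->]; move: Hx Hy; rewrite !inE => Hx Hy.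
by apply: leq_trans (gs_sub x y) _; apply: leq_add.
Qed.

Lemma Bl_n0 i : Bl i != set0.
Proof. by apply/set0Pn; exists 0%R; apply: Bl0. Qed.

Lemma iter_nl j k : minn p (k * (nl j - 1) + 1) <= nl (k * j).
Proof.
have n1 : 0 < nl j by rewrite /nl card_gt0 Bl_n0.
elim: k => [|k IH].
  by rewrite !mul0n add0n; apply: leq_trans (geq_minr _ _) _; rewrite /nl card_gt0 Bl_n0.
have H1 := CD pr (Bl_n0 (k * j)) (Bl_n0 j).
have H2 := subset_leq_card (Bl_add (k * j) j).
rewrite !mulSnr; move: IH H1 H2 n1; rewrite /nl => IH H1 H2 n1.
rewrite -subn1 in H1. set a := #|Bl (k * j)| in IH H1 *. set b := #|Bl j| in IH H1 n1 *. set c := #|sumset _ _| in H1 H2. set m := k * (b - 1) in IH *. set d := #|Bl (k * j + j)| in H2 *. lia.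

Qed.

Lemma sum_tri j n : j <= n -> 2 * \sum_(j <= i < n) (i - j + 1) = (n - j) * (n - j + 1).
Proof.
move=> Hjn; elim: n Hjn => [|n IH] Hjn.
  by rewrite big_geq.
case: (leqP j n) => H.
  rewrite big_nat_recr //= mulnDr IH //. 
  have -> : n.+1 - j = (n - j) + 1 by lia.
  timeout 20 nia.
have -> : j = n.+1 by lia.
by rewrite big_geq // subnn.
Qed.

Lemma level j : 1 <= j -> j < s -> 5 * j <= s + 5 -> 5 * s < 2 * p ->
  (s - j) * (s - j + 1) * (nl j - 1) <= 2 * j * (s * s).
Proof.
move=> j1 js j5 sp.
rewrite leqNgt; apply/negP => Hc.
set D := (s - j) * (s - j + 1) in Hc.
set n := nl j in Hc.
have D1 : 1 <= D by rewrite /D; timeout 20 nia.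
have Hi : forall i, j <= i < s -> 2 * (s * s) * (i - j + 1) + 1 <= D * nl i.
  move=> i /andP [ji iS].
  set k := i %/ j.
  have kj : k * j <= i := leq_trunc_div i j.
  have ikj : i - j + 1 <= k * j.
    have := divn_eq i j; have := ltn_pmod i j1; rewrite -/k; lia.
  have H1 := iter_nl j k; have H2 := nl_mono kj.
  rewrite -/n in H1.
  set m := nl i in H2 *. set q := nl (k * j) in H1 H2.
  case: (leqP p (k * (n - 1) + 1)) => Hcap.
  - have pm : p <= m by lia.
    have u1 : 1 <= s - j by lia.
    have e1 : i - j + 1 <= s - j by lia.
    have e2 : 4 * s <= 5 * (s - j + 1) by lia.
    have e3 : 2 * (s * s) + 1 <= (s - j + 1) * p.
      move: e2 u1; set u := s - j + 1 => e2 u1.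
      have f1 := leq_mul (leqnn u) sp.
      have f2 := leq_mul e2 (leqnn s).
      move: f1 f2; clearbody u; lia.
    apply: (@leq_trans (D * p)); last by exact: (leq_mul (leqnn _) pm).
    rewrite /D -[(s - j) * _ * p]mulnA.
    apply: (@leq_trans ((s - j) * (2 * (s * s) + 1))); last by exact: (leq_mul (leqnn _) e3).
    rewrite [X in _ <= X]mulnDr muln1; apply: leq_add; last exact: u1.
    by rewrite mulnC; apply: leq_mul.
  - have qm : k * (n - 1) + 1 <= m by lia.
    apply: (@leq_trans (D * (k * (n - 1) + 1))); last by exact: (leq_mul (leqnn _) qm).
    have : 2 * (s * s) * (k * j) <= D * (k * (n - 1)).
      have -> : D * (k * (n - 1)) = k * (D * (n - 1)) by ring.
      have -> : 2 * (s * s) * (k * j) = k * (2 * j * (s * s)) by ring.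
      by rewrite leq_mul2l ltnW ?orbT.
    move=> HH; rewrite [X in _ <= X]mulnDr muln1; apply: leq_add; last exact: D1.
    exact: leq_trans (leq_mul (leqnn _) ikj) HH.
have Hsum : \sum_(j <= i < s) (2 * (s * s) * (i - j + 1) + 1) <= D * (s * s).
  have M : \sum_(0 <= i < s) nl i = s * s by rewrite big_mkord mass.
  apply: (@leq_trans (D * \sum_(0 <= i < s) nl i)); last by rewrite M.
  rewrite (big_cat_nat (leq0n j) (ltnW js)) /= mulnDr.
  apply: leq_trans (leq_addl _ _).
  rewrite big_distrr /= big_nat_cond [X in _ <= X]big_nat_cond.
  apply: leq_sum => i /andP [Hi0 _]; exact: Hi.
move: Hsum; rewrite big_split /= -big_distrr /= sum_nat_const_nat.
have := sum_tri (ltnW js); rewrite -/D.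
set t := \sum_(j <= i < s) (i - j + 1). move=> Ht.
have -> : 2 * (s * s) * t = (s * s) * (2 * t) by ring.
rewrite Ht [D * _]mulnC muln1; set z := _ * D; rewrite -[X in _ <= X]addn0 leq_add2l leqn0 subn_eq0 leqNgt js.
done.
Qed.

Lemma nl_small i : 1 <= i -> 5 * i <= s -> 5 * s < 2 * p -> 8 * nl i <= 8 + 25 * i.
Proof.
move=> i1 i5 sp.
have iS : i < s by lia.
have i55 : 5 * i <= s + 5 by lia.
have H := level i1 iS i55 sp.
set D := (s - i) * (s - i + 1) in H.
set n := nl i in H *.
have e0 : 4 * s <= 5 * (s - i) by lia.
have e1 : 16 * (s * s) <= 25 * D.
  apply: (@leq_trans ((5 * (s - i)) * (5 * (s - i)))).
    have -> : 16 * (s * s) = (4 * s) * (4 * s) by ring.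
    exact: leq_mul.
  have -> : 5 * (s - i) * (5 * (s - i)) = 25 * ((s - i) * (s - i)) by ring.
  rewrite leq_mul2l /D leq_mul2l; apply/orP; right; apply/orP; right; lia.
have e2 : (16 * (n - 1)) * (s * s) <= (50 * i) * (s * s).
  apply: (@leq_trans (25 * D * (n - 1))).
    have -> : 16 * (n - 1) * (s * s) = 16 * (s * s) * (n - 1) by ring.
    exact: leq_mul.
  have -> : 50 * i * (s * s) = 25 * (2 * i * (s * s)) by ring.
  rewrite -mulnA leq_mul2l H orbT //.
rewrite leq_pmul2r in e2; last by rewrite muln_gt0; lia.
lia.
Qed.

Lemma Qbound : 1000 <= s -> 5 * s < 2 * p ->
  80 * \sum_(i < s) minn s (nl i) <= 69 * (s * s) + 109 * s.
Proof.
move=> s1000 sp.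
set J := s %/ 5.
have dJ := divn_eq s 5; have mJ := ltn_pmod s (isT : 0 < 5); rewrite -/J in dJ.
have J5 : 5 * J <= s by lia.
have J5' : s < 5 * J + 5 by lia.
have Js : J <= s by lia.
have Hi : forall i, i < J -> 16 * minn s (nl i) <= 16 + 50 * (i + 1).
  move=> i iJ.
  apply: (@leq_trans (16 * nl i)); first by rewrite leq_mul2l geq_minr orbT.
  case: i iJ => [|i] iJ.
    have := nl_small (leqnn 1) (ltnW (leq_trans _ J5)) sp.
    have := nl_mono (leq0n 1); lia.
  have := nl_small (ltn0Sn i) (ltnW (leq_trans _ J5)) sp.
  have : i.+2 <= J by [].
  lia.
rewrite -(big_mkord xpredT (fun i => minn s (nl i))) (big_cat_nat (leq0n J) Js) /= mulnDr.
have A : 16 * \sum_(0 <= i < J) minn s (nl i) <= 16 * J + 25 * (J * (J + 1)).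
  apply: (@leq_trans (\sum_(0 <= i < J) (16 + 50 * (i + 1)))).
    rewrite big_distrr /= big_nat_cond [X in _ <= X]big_nat_cond.
    by apply: leq_sum => i /andP [/andP [_ iJ] _]; apply: Hi.
  rewrite big_split /= sum_nat_const_nat -big_distrr /=.
  have := sum_tri (leq0n J); rewrite !subn0.
  set t := \sum_(0 <= i < J) _.
  have -> : \sum_(0 <= i < J) (i + 1) = t by apply: eq_bigr => i _; rewrite subn0.
  move=> Ht.
  have -> : 50 * t = 25 * (2 * t) by ring.
  by rewrite Ht mulnC.
have B : \sum_(J <= i < s) minn s (nl i) <= (s - J) * s.
  rewrite -sum_nat_const_nat big_nat_cond [X in _ <= X]big_nat_cond.
  by apply: leq_sum => i _; apply: geq_minl.
have C : 25 * (J * J) <= s * s.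
  have -> : 25 * (J * J) = (5 * J) * (5 * J) by ring.
  exact: leq_mul.
have E : 5 * ((s - J) * s) <= (4 * s + 4) * s.
  rewrite mulnA; apply: leq_mul => //; lia.
set a := \sum_(0 <= i < J) _ in A *.
set b := \sum_(J <= i < s) _ in B *.
move: A B C E.
have -> : J * (J + 1) = J * J + J by ring.
set x := J * J. set y := (s - J) * s.
have -> : (4 * s + 4) * s = 4 * (s * s) + 4 * s by ring.
set z := s * s.
clearbody a b x y z. set ss := #|S| in J5 *. clearbody ss J. lia.
Qed.

Definition rr (n : 'Z_p) : nat := \sum_(a in S) ((n - a)%R \in S).

Lemma rep_r n : rep_count S n = rr n.
Proof.
rewrite /rep_count -sum1dep_card big_mkcond /= -(pair_bigA _ (fun a b =>
  if (a \in S) && (b \in S) && (a + b == n)%R then 1 else 0)) /=.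
rewrite /rr [RHS]big_mkcond /=; apply: eq_bigr => a _.
rewrite (eq_bigr (fun b => if b == (n - a)%R then ((a \in S) && ((n - a)%R \in S) : nat) else 0)).
  by rewrite -big_mkcond big_pred1_eq; case: (a \in S).
move=> b _.
have -> : (a + b == n)%R = (b == n - a)%R.
  by rewrite [RHS]eq_sym subr_eq eq_sym addrC.
by case: eqP => [->|_]; rewrite ?andbF //; case: (a \in S); case: ((n - a)%R \in S).
Qed.

Lemma inner_n a b : \sum_n (((n - a)%R \in S) * ((n - b)%R \in S)) = fs (b - a)%R.
Proof.
rewrite -(sum_shift _ a) /fs [RHS]big_mkcond /=; apply: eq_bigr => x _.
rewrite addrK.
have -> : (x + a - b = x - (b - a))%R by ring.
by case: (x \in S); rewrite ?mul0n ?mul1n.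
Qed.

Lemma outer_a a : \sum_(b in S) fs (b - a)%R <= \sum_(i < s) minn s (nl i).
Proof.
rewrite (eq_bigr (fun b => \sum_(i < s) (gs (b - a)%R <= i : nat))); last first.
  by move=> b _; rewrite sum_le_i -(fgs (b - a)%R) addnK.
rewrite exchange_big /=; apply: leq_sum => i _.
rewrite leq_min; apply/andP; split.
  apply: (@leq_trans (\sum_(b in S) 1)); last by rewrite sum1_card.
  by apply: leq_sum => b _; exact: leq_b1.
apply: (@leq_trans (\sum_b (gs (b - a)%R <= i : nat))).
  by rewrite [X in _ <= X](bigID (fun b => b \in S)) /= leq_addr.
by rewrite (sum_shift (fun d => (gs d <= i : nat)) (- a)%R) nlE.
Qed.

Lemma energy : \sum_n rr n * rr n <= s * \sum_(i < s) minn s (nl i).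
Proof.
rewrite (eq_bigr (fun n => \sum_(a in S) \sum_(b in S) (((n - a)%R \in S) * ((n - b)%R \in S)))); last first.
  move=> n _; rewrite /rr big_distrl /=; apply: eq_bigr => a _.
  by rewrite big_distrr.
rewrite exchange_big /=.
rewrite (eq_bigr (fun a => \sum_(b in S) fs (b - a)%R)); last first.
  move=> a _; rewrite exchange_big /=; apply: eq_bigr => b _; exact: inner_n.
rewrite -sum_nat_const; apply: leq_sum => a _; exact: outer_a.
Qed.
End Main.

Lemma two_ab x y : 2 * (x * y) <= x * x + y * y.
Proof.
wlog le : x y / y <= x.
  move=> H; case: (leqP y x) => [|/ltnW] h; first exact: H.
  by rewrite [x * y]mulnC addnC; apply: H.
rewrite -(subnK le); set k := x - y; clearbody k.
rewrite !mulnDl !mulnDr; lia.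
Qed.

Lemma CSn (I : finType) (T : pred I) (f : I -> nat) :
  (\sum_(i in T) f i) * (\sum_(i in T) f i) <= #|T| * \sum_(i in T) (f i * f i).
Proof.
have E1 : (\sum_(i in T) f i) * (\sum_(i in T) f i) = \sum_(i in T) \sum_(j in T) (f i * f j).
  by rewrite big_distrl; apply: eq_bigr => i _; rewrite big_distrr.
have E2 : \sum_(i in T) \sum_(j in T) (f i * f i + f j * f j) = 2 * (#|T| * \sum_(i in T) (f i * f i)).
  rewrite (eq_bigr (fun i => #|T| * (f i * f i) + \sum_(j in T) (f j * f j))); last first.
    by move=> i _; rewrite big_split /= sum_nat_const.
  by rewrite big_split /= sum_nat_const -big_distrr /= mul2n -addnn.
have E3 : 2 * \sum_(i in T) \sum_(j in T) (f i * f j) <= \sum_(i in T) \sum_(j in T) (f i * f i + f j * f j).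
  rewrite big_distrr; apply: leq_sum => i _; rewrite big_distrr; apply: leq_sum => j _.
  exact: two_ab.
by rewrite -(leq_pmul2l (isT : 0 < 2)) E1; apply: leq_trans E3 _; rewrite E2.
Qed.

Lemma natmain p (pr : prime p) (S T : {set 'Z_p}) :
  p < 3 * #|S| -> 3000 < p -> 5 * #|S| < 2 * p ->
  exists Q, (\sum_(n in T) rep_count S n) * (\sum_(n in T) rep_count S n) <= #|T| * (#|S| * Q)
   /\ 80 * Q <= 69 * (#|S| * #|S|) + 109 * #|S|.
Proof.
move=> p3 p3000 sp.
have s1 : 1000 < #|S| by lia.
rewrite (eq_bigr (rr S)); last by move=> n _; rewrite rep_r.
exists (\sum_(i < #|S|) minn #|S| (nl S i)); split; last by apply: Qbound; lia.
apply: leq_trans (CSn _ _) _; rewrite leq_mul2l; apply/orP; right.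
apply: leq_trans (energy S).
by rewrite [X in _ <= X](bigID (fun n => n \in T)) /= leq_addr.
Qed.

Local Open Scope R_scope.

Lemma real_final (N Q s t : R) :
  (0 <= N) -> (1001 <= s) -> (1 <= t) -> (0 <= Q) ->
  (N * N <= t * (s * Q)) -> (80 * Q <= 69 * (s * s) + 109 * s) ->
  (N < 93 / 100 * s * sqrt (s * t)).
Proof.
move=> N0 s1 t1 Q0 h1 h2.
set q := sqrt (s * t).
have q0 : (0 <= q) by apply: sqrt_pos.
have qq : (q * q = s * t) by apply: sqrt_sqrt; nra.
apply: Rnot_le_lt => H.
have c0 : (0 <= 93 / 100 * s * q) by nra.
have h3 : ((93 / 100 * s * q) * (93 / 100 * s * q) <= N * N) by nra.
have h4 : ((93 / 100 * s * q) * (93 / 100 * s * q) = 8649 / 10000 * (s * s) * (s * t)).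
  rewrite -qq; lra.
have h5 : (80 * (N * N) <= t * s * (69 * (s * s) + 109 * s)) by nra.
have ts : (0 < t * (s * s)) by nra.
have h6 : (t * (s * s) * (69192 / 1000 * s) <= t * (s * s) * (69 * s + 109)) by nra.
have h7 : (69192 / 1000 * s <= 69 * s + 109).
  by apply: (Rmult_le_reg_l (t * (s * s))).
lra.
Qed.

Theorem lemma4 : exists p0 : nat, forall p : nat, prime p -> (p0 < p)%N ->
  forall S : {set 'Z_p},
    Rlt (Rdiv (INR p) (INR 3)) (INR #|S|) ->
    Rlt (INR #|S|) (Rdiv (Rmult (INR 2) (INR p)) (INR 5)) ->
    forall T : {set 'Z_p}, T != set0 ->
      Rlt (INR (\sum_(n in T) rep_count S n)%N)
          (Rmult (Rmult (Rdiv (INR 93) (INR 100)) (INR #|S|))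
                 (sqrt (Rmult (INR #|S|) (INR #|T|)))).
Proof.
exists 3000%N => p pr hp S H1 H2 T Tn0.
have e2 : INR 2 = 2 by rewrite INR_IZR_INZ.
have e3 : INR 3 = 3 by rewrite INR_IZR_INZ.
have e5 : INR 5 = 5 by rewrite INR_IZR_INZ.
have e93 : INR 93 = 93 by rewrite INR_IZR_INZ.
have e100 : INR 100 = 100 by rewrite INR_IZR_INZ.
rewrite e93 e100.
rewrite e3 in H1; rewrite e2 e5 in H2.
have p3 : (p < 3 * #|S|)%N.
  apply/ltP; apply: INR_lt; rewrite mult_INR e3; lra.
have sp : (5 * #|S| < 2 * p)%N.
  apply/ltP; apply: INR_lt; rewrite !mult_INR e2 e5; lra.
have [Q [h1 h2]] := natmain pr T p3 hp sp.
have t1 : (0 < #|T|)%N by rewrite card_gt0.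
have s1 : (1000 < #|S|)%N by lia.
have h1' := le_INR _ _ (elimT leP h1).
have h2' := le_INR _ _ (elimT leP h2).
rewrite -!multE !mult_INR in h1'.
rewrite -!multE -!plusE (mult_INR 80 Q) (plus_INR (Nat.mul 69 (Nat.mul #|S| #|S|)) (Nat.mul 109 #|S|)) (mult_INR 69) (mult_INR 109) (mult_INR #|S| #|S|) in h2'.
have e80 : INR 80 = 80 by rewrite INR_IZR_INZ.
have e69 : INR 69 = 69 by rewrite INR_IZR_INZ.
have e109 : INR 109 = 109 by rewrite INR_IZR_INZ.
rewrite e80 e69 e109 in h2'.
apply: real_final.
- exact: pos_INR.
- apply: Rle_trans (le_INR 1001 _ _); first by rewrite INR_IZR_INZ; right.
  by apply/leP.
- by apply: (le_INR 1); apply/leP.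
- exact: pos_INR.
- exact: h1'.
- exact: h2'.
Qed.
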